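(* Let $\mathbb{R}$ be a generalized Reedy category and $\mathcal{E}$ an $\mathbb{R}$-projective Quillen model category in which the relevant limits and colimits exist. Let $f:A\to B$ be a trivial Reedy cofibration in $\mathcal{E}^{\mathbb{R}}$ such that for every object $r$ of $\mathbb{R}$ the induced map $L_r(f):L_r(A)\to L_r(B)$ is a trivial cofibration in $\mathcal{E}$. Then $f$ has the left lifting property with respect to Reedy fibrations.
   Context: A generalized Reedy category is a small category $\mathbb{R}$ with wide subcategories $\mathbb{R}^+,\mathbb{R}^-$ and degree $d:\mathrm{Ob}(\mathbb{R})\to\mathbb{N}$ such that (i) non-invertible morphisms of $\mathbb{R}^+$ (resp. $\mathbb{R}^-$) strictly raise (resp. lower) degree, isomorphisms preserve degree; (ii) $\mathbb{R}^+\cap\mathbb{R}^-=\mathrm{Iso}(\mathbb{R})$; (iii) every morphism factors as $gh$ with $g\in\mathbb{R}^+,h\in\mathbb{R}^-$, uniquely up to isomorphism; (iv) if $\theta f=f$ with $\theta$ an isomorphism and $f\in\mathbb{R}^-$ then $\theta$ is an identity. $L_r(X)=\mathrm{colim}X_s$ over the category $\mathbb{R}^+(r)$ of non-invertible $u:s\to r$ in $\mathbb{R}^+$ (morphisms $w$ with $u=u'w$); $M_r(X)=\lim X_s$ over the category $\mathbb{R}^-(r)$ of non-invertible $u:r\to s$ in $\mathbb{R}^-$ (morphisms $w$ with $u'=wu$); both carry $\mathrm{Aut}(r)$-actions, with equivariant maps $L_r(X)\to X_r\to M_r(X)$. $\mathcal{E}$ is $\mathbb{R}$-projective if each $\mathcal{E}^{\mathrm{Aut}(r)}$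 (objects with $\mathrm{Aut}(r)$-action) carries the projective model structure (weak equivalences and fibrations detected on underlying maps). A map $f:X\to Y$ is a Reedy cofibration if each $X_r\cup_{L_r(X)}L_r(Y)\to Y_r$ is a cofibration in $\mathcal{E}^{\mathrm{Aut}(r)}$, a Reedy weak equivalence if each $f_r$ is a weak equivalence, a Reedy fibration if each $X_r\to M_r(X)\times_{M_r(Y)}Y_r$ is a fibration; a trivial Reedy cofibration is a Reedy cofibration that is a Reedy weak equivalence. *)

(* Defs.v *)
Set Implicit Arguments.
Unset Strict Implicit.

Record Category := {
  Ob :> Type;
  Hom : Ob -> Ob -> Type;
  idm : forall a, Hom a a;
  comp : forall a b c, Hom b c -> Hom a b -> Hom a c;
  comp_idl : forall a b (f : Hom a b), comp (idm b) f = f;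
  comp_idr : forall a b (f : Hom a b), comp f (idm a) = f;
  comp_assoc : forall a b c d (f : Hom a b) (g : Hom b c) (h : Hom c d),
      comp h (comp g f) = comp (comp h g) f }.
Arguments Hom {_} _ _.
Arguments idm {_} _.
Arguments comp {_ _ _ _} _ _.
Notation "g ∘ f" := (comp g f) (at level 40, left associativity).

Definition iso (C : Category) (a b : C) (f : Hom a b) : Prop :=
  exists g : Hom b a, g ∘ f = idm a /\ f ∘ g = idm b.

Definition lifts (O : Type) (H : O -> O -> Type)
  (cmp : forall a b c, H b c -> H a b -> H a c)
  (a b x y : O) (i : H a b) (p : H x y) : Prop :=
  forall (u : H a x) (v : H b y), cmp _ _ _ p u = cmp _ _ _ v i ->
    exists l : H b x, cmp _ _ _ l i = u /\ cmp _ _ _ p l = v.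

Definition retract_of (O : Type) (H : O -> O -> Type)
  (cmp : forall a b c, H b c -> H a b -> H a c) (id : forall a, H a a)
  (a b c d : O) (f : H a b) (g : H c d) : Prop :=
  exists (s1 : H a c) (r1 : H c a) (s2 : H b d) (r2 : H d b),
    cmp _ _ _ r1 s1 = id a /\ cmp _ _ _ r2 s2 = id b /\
    cmp _ _ _ g s1 = cmp _ _ _ s2 f /\ cmp _ _ _ f r1 = cmp _ _ _ r2 g.

Definition is_pushout_raw (O : Type) (H : O -> O -> Type)
  (cmp : forall a b c, H b c -> H a b -> H a c)
  (a b c P : O) (f : H a b) (g : H a c) (i1 : H b P) (i2 : H c P) : Prop :=
  cmp _ _ _ i1 f = cmp _ _ _ i2 g /\
  forall (Z : O) (x : H b Z) (y : H c Z), cmp _ _ _ x f = cmp _ _ _ y g ->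
    exists h : H P Z, (cmp _ _ _ h i1 = x /\ cmp _ _ _ h i2 = y) /\
      forall h' : H P Z, cmp _ _ _ h' i1 = x -> cmp _ _ _ h' i2 = y -> h' = h.

Definition is_pullback_raw (O : Type) (H : O -> O -> Type)
  (cmp : forall a b c, H b c -> H a b -> H a c)
  (b c d P : O) (f : H b d) (g : H c d) (q1 : H P b) (q2 : H P c) : Prop :=
  cmp _ _ _ f q1 = cmp _ _ _ g q2 /\
  forall (Z : O) (x : H Z b) (y : H Z c), cmp _ _ _ f x = cmp _ _ _ g y ->
    exists h : H Z P, (cmp _ _ _ q1 h = x /\ cmp _ _ _ q2 h = y) /\
      forall h' : H Z P, cmp _ _ _ q1 h' = x -> cmp _ _ _ q2 h' = y -> h' = h.

Record IsModel (O : Type) (H : O -> O -> Type)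
  (cmp : forall a b c, H b c -> H a b -> H a c) (id : forall a, H a a)
  (W C F : forall a b, H a b -> Prop) : Prop := {
  mc_initial : exists z : O, forall x : O, exists f : H z x,
      forall g : H z x, g = f;
  mc_terminal : exists t : O, forall x : O, exists f : H x t,
      forall g : H x t, g = f;
  mc_pushouts : forall a b c (f : H a b) (g : H a c),
      exists P (i1 : H b P) (i2 : H c P), is_pushout_raw cmp f g i1 i2;
  mc_pullbacks : forall b c d (f : H b d) (g : H c d),
      exists P (q1 : H P b) (q2 : H P c), is_pullback_raw cmp f g q1 q2;
  mc_2of3_comp : forall a b c (f : H a b) (g : H b c),
      W _ _ f -> W _ _ g -> W _ _ (cmp _ _ _ g f);
  mc_2of3_left : forall a b c (f : H a b) (g : H b c),
      W _ _ g -> W _ _ (cmp _ _ _ g f) -> W _ _ f;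
  mc_2of3_right : forall a b c (f : H a b) (g : H b c),
      W _ _ f -> W _ _ (cmp _ _ _ g f) -> W _ _ g;
  mc_retract_W : forall a b c d (f : H a b) (g : H c d),
      retract_of cmp id f g -> W _ _ g -> W _ _ f;
  mc_retract_C : forall a b c d (f : H a b) (g : H c d),
      retract_of cmp id f g -> C _ _ g -> C _ _ f;
  mc_retract_F : forall a b c d (f : H a b) (g : H c d),
      retract_of cmp id f g -> F _ _ g -> F _ _ f;
  mc_lift_tcof : forall a b x y (i : H a b) (p : H x y),
      C _ _ i -> W _ _ i -> F _ _ p -> lifts cmp i p;
  mc_lift_tfib : forall a b x y (i : H a b) (p : H x y),
      C _ _ i -> F _ _ p -> W _ _ p -> lifts cmp i p;
  mc_fact_tcof : forall a b (f : H a b), exists c (i : H a c) (p : H c b),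
      C _ _ i /\ W _ _ i /\ F _ _ p /\ f = cmp _ _ _ p i;
  mc_fact_tfib : forall a b (f : H a b), exists c (i : H a c) (p : H c b),
      C _ _ i /\ F _ _ p /\ W _ _ p /\ f = cmp _ _ _ p i }.

Definition MorClass (C : Category) := forall a b : C, Hom a b -> Prop.

Definition is_model_category (E : Category) (W Cf F : MorClass E) : Prop :=
  IsModel (@comp E) (@idm E) W Cf F.

Record GenReedy (R : Category) := {
  plus : MorClass R;
  minus : MorClass R;
  deg : R -> nat;
  plus_id : forall a, plus (idm a);
  plus_comp : forall a b c (f : Hom a b) (g : Hom b c),
      plus f -> plus g -> plus (g ∘ f);
  minus_id : forall a, minus (idm a);
  minus_comp : forall a b c (f : Hom a b) (g : Hom b c),
      minus f -> minus g -> minus (g ∘ f);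
  deg_plus : forall a b (f : Hom a b), plus f -> ~ iso f -> deg a < deg b;
  deg_minus : forall a b (f : Hom a b), minus f -> ~ iso f -> deg b < deg a;
  deg_iso : forall a b (f : Hom a b), iso f -> deg a = deg b;
  plus_minus_iso : forall a b (f : Hom a b), (plus f /\ minus f) <-> iso f;
  fact_ex : forall a b (f : Hom a b), exists c (h : Hom a c) (g : Hom c b),
      minus h /\ plus g /\ f = g ∘ h;
  fact_uniq : forall a b c c' (h : Hom a c) (g : Hom c b) (h' : Hom a c')
      (g' : Hom c' b), minus h -> plus g -> minus h' -> plus g' ->
      g ∘ h = g' ∘ h' ->
      exists th : Hom c c', iso th /\ th ∘ h = h' /\ g' ∘ th = g;
  iso_fix_minus : forall a b (f : Hom a b) (th : Hom b b),
      iso th -> minus f -> th ∘ f = f -> th = idm b }.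
Arguments plus {R} _ {a b} _.
Arguments minus {R} _ {a b} _.

Record Functor (R E : Category) := {
  fob :> R -> E;
  fmap : forall a b : R, Hom a b -> Hom (fob a) (fob b);
  fmap_id : forall a, fmap (idm a) = idm (fob a);
  fmap_comp : forall a b c (f : Hom a b) (g : Hom b c),
      fmap (g ∘ f) = fmap g ∘ fmap f }.
Arguments fmap {R E} _ {a b} _.

Record NatTrans (R E : Category) (X Y : Functor R E) := {
  ntc :> forall r : R, Hom (X r) (Y r);
  ntc_nat : forall a b (u : Hom a b), ntc b ∘ fmap X u = fmap Y u ∘ ntc a }.

Definition Aut (R : Category) (r : R) := { th : Hom r r | iso th }.

Definition is_action (R E : Category) (r : R) (x : E) (act : Aut r -> Hom x x)
  : Prop :=
  (forall h : iso (idm r), act (exist _ (idm r) h) = idm x) /\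
  (forall (t t' : Aut r) (h : iso (proj1_sig t ∘ proj1_sig t')),
      act (exist _ (proj1_sig t ∘ proj1_sig t') h) = act t ∘ act t').

Definition equivariant (R E : Category) (r : R) (x y : E)
  (ax : Aut r -> Hom x x) (ay : Aut r -> Hom y y) (h : Hom x y) : Prop :=
  forall t : Aut r, h ∘ ax t = ay t ∘ h.

(* Cofibrations of the projective model structure on E^{Aut(r)}:
   maps with the LLP (in E^{Aut(r)}) w.r.t. equivariant maps whose
   underlying map is a trivial fibration. *)
Definition cofG (R E : Category) (W F : MorClass E) (r : R) (x y : E)
  (ax : Aut r -> Hom x x) (ay : Aut r -> Hom y y) (k : Hom x y) : Prop :=
  forall (u v : E) (au : Aut r -> Hom u u) (av : Aut r -> Hom v v)
    (p : Hom u v), is_action au -> is_action av -> equivariant au av p ->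
    W _ _ p -> F _ _ p ->
    forall (a : Hom x u) (b : Hom y v),
      equivariant ax au a -> equivariant ay av b -> p ∘ a = b ∘ k ->
      exists l : Hom y u, equivariant ay au l /\ l ∘ k = a /\ p ∘ l = b.

Definition GObj (R E : Category) (r : R) :=
  { x : E & { act : Aut r -> Hom x x | is_action act } }.
Definition gact (R E : Category) (r : R) (X : GObj E r) : Aut r -> Hom (projT1 X) (projT1 X) :=
  proj1_sig (projT2 X).
Definition GHom (R E : Category) (r : R) (X Y : GObj E r) :=
  { h : Hom (projT1 X) (projT1 Y) | equivariant (gact X) (gact Y) h }.

Lemma equiv_comp (R E : Category) (r : R) (x y z : E) (ax : Aut r -> Hom x x)
  (ay : Aut r -> Hom y y) (az : Aut r -> Hom z z) (f : Hom x y) (g : Hom y z) :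
  equivariant ax ay f -> equivariant ay az g -> equivariant ax az (g ∘ f).
Proof.
  intros Hf Hg t. rewrite <- comp_assoc, Hf, comp_assoc, Hg, comp_assoc.
  reflexivity.
Qed.

Lemma equiv_id (R E : Category) (r : R) (x : E) (ax : Aut r -> Hom x x) :
  equivariant ax ax (idm x).
Proof. intros t. rewrite comp_idl, comp_idr. reflexivity. Qed.

Definition GComp (R E : Category) (r : R) (X Y Z : GObj E r)
  (g : GHom Y Z) (f : GHom X Y) : GHom X Z :=
  exist _ (proj1_sig g ∘ proj1_sig f) (equiv_comp (proj2_sig f) (proj2_sig g)).
Definition GId (R E : Category) (r : R) (X : GObj E r) : GHom X X :=
  exist _ (idm (projT1 X)) (equiv_id (gact X)).

(* E is R-projective: each E^{Aut(r)} carries the projective model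
   structure (weak equivalences and fibrations detected on underlying
   maps, cofibrations = LLP w.r.t. trivial fibrations). *)
Definition R_projective (R E : Category) (W Cf F : MorClass E) : Prop :=
  forall r : R,
    IsModel (@GComp R E r) (@GId R E r)
      (fun X Y h => W _ _ (proj1_sig h))
      (fun X Y h => cofG W F (gact X) (gact Y) (proj1_sig h))
      (fun X Y h => F _ _ (proj1_sig h)).

Section Latching.
Context (R E : Category) (RS : GenReedy R).

Definition LFam (X : Functor R E) (r : R) (Z : E) :=
  forall (s : R) (u : Hom s r), plus RS u -> ~ iso u -> Hom (X s) Z.

Definition lcocone (X : Functor R E) (r : R) (Z : E) (c : LFam X r Z) : Prop :=
  forall (s s' : R) (u : Hom s r) (u' : Hom s' r) (w : Hom s s')
    (hu : plus RS u) (nu : ~ iso u) (hu' : plus RS u') (nu' : ~ iso u'),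
    plus RS w -> u = u' ∘ w -> c s' u' hu' nu' ∘ fmap X w = c s u hu nu.

Definition is_latching (X : Functor R E) (r : R) (L : E) (i : LFam X r L) : Prop :=
  lcocone i /\
  forall (Z : E) (c : LFam X r Z), lcocone c ->
    exists h : Hom L Z,
      (forall s u hu nu, h ∘ i s u hu nu = c s u hu nu) /\
      forall h' : Hom L Z, (forall s u hu nu, h' ∘ i s u hu nu = c s u hu nu) ->
        h' = h.

Definition lat_can (X : Functor R E) (r : R) (L : E) (i : LFam X r L)
  (l : Hom L (X r)) : Prop :=
  forall s u hu nu, l ∘ i s u hu nu = fmap X u.

Definition lat_act (X : Functor R E) (r : R) (L : E) (i : LFam X r L)
  (a : Aut r -> Hom L L) : Prop :=
  forall (t : Aut r) s (u : Hom s r) hu nu hu' nu',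
    a t ∘ i s u hu nu = i s (proj1_sig t ∘ u) hu' nu'.

Definition lat_map (X Y : Functor R E) (f : NatTrans X Y) (r : R)
  (LX : E) (iX : LFam X r LX) (LY : E) (iY : LFam Y r LY) (g : Hom LX LY) : Prop :=
  forall s u hu nu, g ∘ iX s u hu nu = iY s u hu nu ∘ f s.

Definition MFam (X : Functor R E) (r : R) (Z : E) :=
  forall (s : R) (u : Hom r s), minus RS u -> ~ iso u -> Hom Z (X s).

Definition mcone (X : Functor R E) (r : R) (Z : E) (c : MFam X r Z) : Prop :=
  forall (s s' : R) (u : Hom r s) (u' : Hom r s') (w : Hom s s')
    (hu : minus RS u) (nu : ~ iso u) (hu' : minus RS u') (nu' : ~ iso u'),
    minus RS w -> u' = w ∘ u -> fmap X w ∘ c s u hu nu = c s' u' hu' nu'.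

Definition is_matching (X : Functor R E) (r : R) (M : E) (q : MFam X r M) : Prop :=
  mcone q /\
  forall (Z : E) (c : MFam X r Z), mcone c ->
    exists h : Hom Z M,
      (forall s u hu nu, q s u hu nu ∘ h = c s u hu nu) /\
      forall h' : Hom Z M, (forall s u hu nu, q s u hu nu ∘ h' = c s u hu nu) ->
        h' = h.

Definition mat_can (X : Functor R E) (r : R) (M : E) (q : MFam X r M)
  (m : Hom (X r) M) : Prop :=
  forall s u hu nu, q s u hu nu ∘ m = fmap X u.

Definition mat_map (X Y : Functor R E) (p : NatTrans X Y) (r : R)
  (MX : E) (qX : MFam X r MX) (MY : E) (qY : MFam Y r MY) (g : Hom MX MY) : Prop :=
  forall s u hu nu, qY s u hu nu ∘ g = p s ∘ qX s u hu nu.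

Definition is_pushout (a b c P : E) (f : Hom a b) (g : Hom a c)
  (i1 : Hom b P) (i2 : Hom c P) : Prop := is_pushout_raw (@comp E) f g i1 i2.
Definition is_pullback (b c d P : E) (f : Hom b d) (g : Hom c d)
  (q1 : Hom P b) (q2 : Hom P c) : Prop := is_pullback_raw (@comp E) f g q1 q2.

Local Unset Implicit Arguments.
Context (W Cf F : MorClass E).
Local Set Implicit Arguments.

(* For every r: the relative latching map X_r ∪_{L_r X} L_r Y -> Y_r is a
   cofibration in E^{Aut(r)} (with its induced Aut(r)-actions).  Stated
   for every choice of the (co)limits involved; they are unique up to
   unique isomorphism. *)
Definition reedy_cofibration (X Y : Functor R E) (f : NatTrans X Y) : Prop :=
  forall (r : R) (LX : E) (iX : LFam X r LX) (LY : E) (iY : LFam Y r LY),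
    is_latching iX -> is_latching iY ->
    forall (lX : Hom LX (X r)) (lY : Hom LY (Y r)) (g : Hom LX LY)
      (aY : Aut r -> Hom LY LY),
      lat_can iX lX -> lat_can iY lY -> lat_map f iX iY g -> lat_act iY aY ->
    forall (P : E) (i1 : Hom (X r) P) (i2 : Hom LY P),
      is_pushout lX g i1 i2 ->
    forall (k : Hom P (Y r)) (aP : Aut r -> Hom P P),
      k ∘ i1 = f r -> k ∘ i2 = lY ->
      (forall t : Aut r, aP t ∘ i1 = i1 ∘ fmap X (proj1_sig t) /\
                         aP t ∘ i2 = i2 ∘ aY t) ->
      cofG W F aP (fun t => fmap Y (proj1_sig t)) k.

Definition reedy_weq (X Y : Functor R E) (f : NatTrans X Y) : Prop :=
  forall r : R, W _ _ (f r).

Definition trivial_reedy_cofibration (X Y : Functor R E) (f : NatTrans X Y) : Prop :=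
  reedy_cofibration f /\ reedy_weq f.

(* For every r: X_r -> M_r(X) x_{M_r(Y)} Y_r is a fibration (in
   E^{Aut(r)}, i.e. its underlying map is a fibration in E). *)
Definition reedy_fibration (X Y : Functor R E) (p : NatTrans X Y) : Prop :=
  forall (r : R) (MX : E) (qX : MFam X r MX) (MY : E) (qY : MFam Y r MY),
    is_matching qX -> is_matching qY ->
    forall (mX : Hom (X r) MX) (mY : Hom (Y r) MY) (g : Hom MX MY),
      mat_can qX mX -> mat_can qY mY -> mat_map p qX qY g ->
    forall (Q : E) (q1 : Hom Q MX) (q2 : Hom Q (Y r)),
      is_pullback g mY q1 q2 ->
    forall k : Hom (X r) Q, q1 ∘ k = mX -> q2 ∘ k = p r -> F _ _ k.

Definition latching_trivial_cofibrations (X Y : Functor R E) (f : NatTrans X Y)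
  : Prop :=
  forall (r : R) (LX : E) (iX : LFam X r LX) (LY : E) (iY : LFam Y r LY),
    is_latching iX -> is_latching iY ->
    forall g : Hom LX LY, lat_map f iX iY g -> Cf _ _ g /\ W _ _ g.

Definition llp_nat (X Y X' Y' : Functor R E) (f : NatTrans X Y) (p : NatTrans X' Y')
  : Prop :=
  forall (a : NatTrans X X') (b : NatTrans Y Y'),
    (forall r, p r ∘ a r = b r ∘ f r) ->
    exists l : NatTrans Y X', forall r, l r ∘ f r = a r /\ p r ∘ l r = b r.

End Latching.

(* Main.v *)
Require Import Defs.
From Stdlib Require Import ProofIrrelevance ClassicalEpsilon FunctionalExtensionality PropExtensionality Arith Lia.


Set Implicit Arguments.
Lemma choice_fun (A : Type) (B : A -> Type) (P : forall x, B x -> Prop) :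
  (forall x, exists y, P x y) -> exists g : forall x, B x, forall x, P x (g x).
Proof.
  intros H. exists (fun x => proj1_sig (constructive_indefinite_description _ (H x))).
  intros x. exact (proj2_sig (constructive_indefinite_description _ (H x))).
Qed.

Section ModelLemmas.
Variables (E : Category) (W Cf F : MorClass E).
Hypothesis HE : is_model_category W Cf F.

Lemma llp_W (a b : E) (i : Hom a b) :
  (forall x y (p : Hom x y), F _ _ p -> lifts (@comp E) i p) -> W _ _ i.
Proof.
  intros Hl.
  destruct (mc_fact_tcof HE i) as [c [j [q [Cj [Wj [Fq Eq]]]]]].
  destruct (Hl _ _ q Fq j (idm b)) as [l [H1 H2]].
  { simpl. rewrite comp_idl. symmetry. exact Eq. }
  simpl in *.
  apply (mc_retract_W HE (f:=i) (g:=j)); [|exact Wj].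
  exists (idm a), (idm a), l, q. simpl.
  rewrite !comp_idl, comp_idr. repeat split; auto.
  rewrite comp_idr. exact Eq.
Qed.

Lemma pushout_llp (a b c P : E) (f : Hom a b) (g : Hom a c) (i1 : Hom b P)
  (i2 : Hom c P) : is_pushout f g i1 i2 -> Cf _ _ g -> W _ _ g ->
  forall x y (p : Hom x y), F _ _ p -> lifts (@comp E) i1 p.
Proof.
  intros [Hc Hu] Cg Wg x y p Fp u v Hsq. simpl in *.
  destruct (mc_lift_tcof HE Cg Wg Fp (u:=u ∘ f) (v := v ∘ i2)) as [l [H1 H2]].
  { simpl. rewrite comp_assoc, Hsq, <- comp_assoc, Hc, comp_assoc. reflexivity. }
  simpl in *.
  destruct (Hu _ u l (eq_sym H1)) as [h [[Hh1 Hh2] _]]. simpl in *.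
  exists h. split; auto.
  destruct (Hu _ (p ∘ u) (p ∘ l)) as [h0 [_ Hun]].
  { simpl. rewrite <- !comp_assoc, H1. reflexivity. }
  simpl in *.
  rewrite (Hun v), (Hun (p ∘ h)); auto;
    try (rewrite <- comp_assoc; first [rewrite Hh1 | rewrite Hh2]; reflexivity).
Qed.
End ModelLemmas.


Set Implicit Arguments.
Section Gen.
Variables (R E : Category) (RS : GenReedy R).

Lemma iso_comp (a b c : R) (f : Hom a b) (g : Hom b c) : iso f -> iso g -> iso (g ∘ f).
Proof.
  intros [f' [Hf1 Hf2]] [g' [Hg1 Hg2]]. exists (f' ∘ g'). split.
  - rewrite comp_assoc, <- (comp_assoc g g' f'), Hg1, comp_idr. exact Hf1.
  - rewrite comp_assoc, <- (comp_assoc f' f g), Hf2, comp_idr. exact Hg2.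
Qed.

Lemma isoT (a b : R) (f : Hom a b) : iso f -> {g : Hom b a | g ∘ f = idm a /\ f ∘ g = idm b}.
Proof. intros H. exact (constructive_indefinite_description _ H). Qed.

Lemma iso_of_inv (a b : R) (f : Hom a b) (g : Hom b a) : g ∘ f = idm a -> f ∘ g = idm b -> iso g.
Proof. intros. exists f. split; auto. Qed.

Lemma niso_post (s c c' : R) (u : Hom s c) (t : Hom c c') : iso t -> ~ iso u -> ~ iso (t ∘ u).
Proof.
  intros Ht Nu Htu. apply Nu. destruct (isoT Ht) as [t' [H1 H2]].
  replace u with (t' ∘ (t ∘ u)). apply iso_comp; auto. eapply iso_of_inv; eauto.
  rewrite comp_assoc, H1, comp_idl. reflexivity.
Qed.

Lemma niso_pre (s c c' : R) (u : Hom c s) (t : Hom c' c) : iso t -> ~ iso u -> ~ iso (u ∘ t).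
Proof.
  intros Ht Nu Htu. apply Nu. destruct (isoT Ht) as [t' [H1 H2]].
  replace u with ((u ∘ t) ∘ t'). apply iso_comp; auto. eapply iso_of_inv; eauto.
  rewrite <- comp_assoc, H2, comp_idr. reflexivity.
Qed.

Lemma plus_iso (a b : R) (t : Hom a b) : iso t -> plus RS t.
Proof. intros H. apply (plus_minus_iso RS t) in H. tauto. Qed.
Lemma minus_iso (a b : R) (t : Hom a b) : iso t -> minus RS t.
Proof. intros H. apply (plus_minus_iso RS t) in H. tauto. Qed.

Lemma LFam_irr (X : Functor R E) (r : R) (Z : E) (i : LFam RS X r Z) s (u u' : Hom s r)
  hu nu hu' nu' : u = u' -> i s u hu nu = i s u' hu' nu'.
Proof. intros ->. f_equal; apply proof_irrelevance. Qed.

Lemma MFam_irr (X : Functor R E) (r : R) (Z : E) (i : MFam RS X r Z) s (u u' : Hom r s)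
  hu nu hu' nu' : u = u' -> i s u hu nu = i s u' hu' nu'.
Proof. intros ->. f_equal; apply proof_irrelevance. Qed.

Lemma lat_univ (X : Functor R E) (r : R) (L : E) (i : LFam RS X r L) (Z : E) (c : LFam RS X r Z) :
  is_latching i -> lcocone c -> exists h : Hom L Z, forall s u hu nu, h ∘ i s u hu nu = c s u hu nu.
Proof. intros [_ H] Hc. destruct (H Z c Hc) as [h [H1 _]]. eauto. Qed.

Lemma lat_ext (X : Functor R E) (r : R) (L : E) (i : LFam RS X r L) (Z : E) (h1 h2 : Hom L Z) :
  is_latching i -> (forall s u hu nu, h1 ∘ i s u hu nu = h2 ∘ i s u hu nu) -> h1 = h2.
Proof.
  intros [Hc H] Heq.
  destruct (H Z (fun s u hu nu => h2 ∘ i s u hu nu)) as [h [_ Hu]].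
  - intros s s' u u' w hu nu hu' nu' hw e. rewrite <- comp_assoc. f_equal. eapply Hc; eauto.
  - rewrite (Hu h1), (Hu h2); auto.
Qed.

Lemma mat_univ (X : Functor R E) (r : R) (M : E) (q : MFam RS X r M) (Z : E) (c : MFam RS X r Z) :
  is_matching q -> mcone c -> exists h : Hom Z M, forall s u hu nu, q s u hu nu ∘ h = c s u hu nu.
Proof. intros [_ H] Hc. destruct (H Z c Hc) as [h [H1 _]]. eauto. Qed.

Lemma mat_ext (X : Functor R E) (r : R) (M : E) (q : MFam RS X r M) (Z : E) (h1 h2 : Hom Z M) :
  is_matching q -> (forall s u hu nu, q s u hu nu ∘ h1 = q s u hu nu ∘ h2) -> h1 = h2.
Proof.
  intros [Hc H] Heq.
  destruct (H Z (fun s u hu nu => q s u hu nu ∘ h2)) as [h [_ Hu]].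
  - intros s s' u u' w hu nu hu' nu' hw e. rewrite comp_assoc. f_equal. eapply Hc; eauto.
  - rewrite (Hu h1), (Hu h2); auto.
Qed.

Lemma lcocone_fmap (X : Functor R E) (r : R) :
  lcocone (RS:=RS) (X:=X) (r:=r) (fun s u _ _ => fmap X u).
Proof. intros s s' u u' w hu nu hu' nu' hw ->. rewrite fmap_comp. reflexivity. Qed.

Lemma mcone_fmap (X : Functor R E) (r : R) :
  mcone (RS:=RS) (X:=X) (r:=r) (fun s u _ _ => fmap X u).
Proof. intros s s' u u' w hu nu hu' nu' hw ->. rewrite fmap_comp. reflexivity. Qed.

Lemma functor_action (X : Functor R E) (r : R) :
  is_action (r:=r) (fun t => fmap X (proj1_sig t)).
Proof. split; intros; simpl. apply fmap_id. apply fmap_comp. Qed.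

Lemma po_ext (a b c P Z : E) (f : Hom a b) (g : Hom a c) (i1 : Hom b P) (i2 : Hom c P)
  (h1 h2 : Hom P Z) : is_pushout f g i1 i2 -> h1 ∘ i1 = h2 ∘ i1 -> h1 ∘ i2 = h2 ∘ i2 -> h1 = h2.
Proof.
  intros [Hc Hu] e1 e2. destruct (Hu Z (h2 ∘ i1) (h2 ∘ i2)) as [h [_ Hun]].
  - simpl. rewrite <- !comp_assoc, Hc. reflexivity.
  - simpl in Hun. rewrite (Hun h1), (Hun h2); auto.
Qed.

Lemma po_univ (a b c P Z : E) (f : Hom a b) (g : Hom a c) (i1 : Hom b P) (i2 : Hom c P)
  (x : Hom b Z) (y : Hom c Z) : is_pushout f g i1 i2 -> x ∘ f = y ∘ g ->
  exists h : Hom P Z, h ∘ i1 = x /\ h ∘ i2 = y.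
Proof. intros [Hc Hu] e. destruct (Hu Z x y e) as [h [[H1 H2] _]]. eauto. Qed.

Lemma pb_ext (b c d P Z : E) (f : Hom b d) (g : Hom c d) (q1 : Hom P b) (q2 : Hom P c)
  (h1 h2 : Hom Z P) : is_pullback f g q1 q2 -> q1 ∘ h1 = q1 ∘ h2 -> q2 ∘ h1 = q2 ∘ h2 -> h1 = h2.
Proof.
  intros [Hc Hu] e1 e2. destruct (Hu Z (q1 ∘ h2) (q2 ∘ h2)) as [h [_ Hun]].
  - simpl. rewrite !comp_assoc, Hc. reflexivity.
  - simpl in Hun. rewrite (Hun h1), (Hun h2); auto.
Qed.

Lemma pb_univ (b c d P Z : E) (f : Hom b d) (g : Hom c d) (q1 : Hom P b) (q2 : Hom P c)
  (x : Hom Z b) (y : Hom Z c) : is_pullback f g q1 q2 -> f ∘ x = g ∘ y ->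
  exists h : Hom Z P, q1 ∘ h = x /\ q2 ∘ h = y.
Proof. intros [Hc Hu] e. destruct (Hu Z x y e) as [h [[H1 H2] _]]. eauto. Qed.


Lemma plt (c : R) (t : Aut c) s (u : Hom s c) : plus RS u -> plus RS (proj1_sig t ∘ u).
Proof. intros h. apply plus_comp; auto. apply plus_iso. exact (proj2_sig t). Qed.
Lemma nlt (c : R) (t : Aut c) s (u : Hom s c) : ~ iso u -> ~ iso (proj1_sig t ∘ u).
Proof. intros h. apply niso_post; auto. exact (proj2_sig t). Qed.
Lemma mrt (c : R) (t : Aut c) s (u : Hom c s) : minus RS u -> minus RS (u ∘ proj1_sig t).
Proof. intros h. apply minus_comp; auto. apply minus_iso. exact (proj2_sig t). Qed.
Lemma nrt (c : R) (t : Aut c) s (u : Hom c s) : ~ iso u -> ~ iso (u ∘ proj1_sig t).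
Proof. intros h. apply niso_pre; auto. exact (proj2_sig t). Qed.
End Gen.

Lemma comp_rw (C : Category) (a b c d : C) (x : Hom b c) (y : Hom a b) (z : Hom a c) (w : Hom d a) :
  x ∘ y = z -> x ∘ (y ∘ w) = z ∘ w.
Proof. intros <-. apply comp_assoc. Qed.

Ltac nrm := repeat rewrite <- comp_assoc.
Ltac rw e := first [rewrite e | rewrite (@comp_rw _ _ _ _ _ _ _ _ _ (e)) | rewrite (@comp_rw _ _ _ _ _ _ _ _ _ (e _)) | rewrite (@comp_rw _ _ _ _ _ _ _ _ _ (e _ _)) | rewrite (@comp_rw _ _ _ _ _ _ _ _ _ (e _ _ _)) | rewrite (@comp_rw _ _ _ _ _ _ _ _ _ (e _ _ _ _)) | rewrite (@comp_rw _ _ _ _ _ _ _ _ _ (e _ _ _ _ _)) | rewrite (@comp_rw _ _ _ _ _ _ _ _ _ (e _ _ _ _ _ _))]; nrm.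

Arguments plt {R} RS {c} t {s u} _.
Arguments mrt {R} RS {c} t {s u} _.
Lemma GHom_eq (R E : Category) (r : R) (X Y : GObj E r) (h1 h2 : GHom X Y) :
  proj1_sig h1 = proj1_sig h2 -> h1 = h2.
Proof. destruct h1, h2; simpl; intros ->. f_equal. apply proof_irrelevance. Qed.

Set Implicit Arguments.

Section Main.
Variables (R : Category) (RS : GenReedy R) (E : Category) (W Cf F : MorClass E).
Hypothesis HE : is_model_category W Cf F.
Hypothesis Hproj : R_projective R W Cf F.
Hypothesis Hlat : forall (X : Functor R E) (r : R),
      exists (L : E) (i : LFam RS X r L), is_latching i.
Hypothesis Hmat : forall (X : Functor R E) (r : R),
      exists (M : E) (q : MFam RS X r M), is_matching q.
Variables (A B : Functor R E) (f : NatTrans A B).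
Hypothesis Hf : trivial_reedy_cofibration RS W F f.
Hypothesis HL : latching_trivial_cofibrations RS W Cf f.
Variables (X Y : Functor R E) (p : NatTrans X Y).
Hypothesis Hp : reedy_fibration RS F p.
Variables (a : NatTrans A X) (b : NatTrans B Y).
Hypothesis Hsq : forall r, p r ∘ a r = b r ∘ f r.

Section Local.
Variable n : nat.
Variable lo : forall s, deg RS s < n -> Hom (B s) (X s).
Hypothesis LA : forall s hs, lo s hs ∘ f s = a s.
Hypothesis LB : forall s hs, p s ∘ lo s hs = b s.
Hypothesis LN : forall s r (u : Hom s r) hs hr, fmap X u ∘ lo s hs = lo r hr ∘ fmap B u.

Lemma lo_irr s h1 h2 : lo s h1 = lo s h2.
Proof. f_equal. apply proof_irrelevance. Qed.

Variables (c : R) (hc : deg RS c = n).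

Lemma degpl s (u : Hom s c) : plus RS u -> ~ iso u -> deg RS s < n.
Proof. intros. rewrite <- hc. apply (deg_plus (f:=u)); auto. Qed.
Lemma degmi s (u : Hom c s) : minus RS u -> ~ iso u -> deg RS s < n.
Proof. intros. rewrite <- hc. apply (deg_minus (f:=u)); auto. Qed.

Lemma local_lift : exists L : Hom (B c) (X c),
  (forall t : Aut c, L ∘ fmap B (proj1_sig t) = fmap X (proj1_sig t) ∘ L) /\
  L ∘ f c = a c /\ p c ∘ L = b c /\
  (forall s (u : Hom s c) (hs : deg RS s < n), plus RS u -> ~ iso u ->
      L ∘ fmap B u = fmap X u ∘ lo s hs) /\
  (forall s (u : Hom c s) (hs : deg RS s < n), minus RS u -> ~ iso u ->
      fmap X u ∘ L = lo s hs ∘ fmap B u).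
Proof.
  destruct (Hlat A c) as [LAo [iA latA]].
  destruct (Hlat B c) as [LBo [iB latB]].
  destruct (Hmat X c) as [MX [qX matX]].
  destruct (Hmat Y c) as [MY [qY matY]].
  destruct (lat_univ latA (@lcocone_fmap _ _ RS A c)) as [lA canA].
  destruct (lat_univ latB (@lcocone_fmap _ _ RS B c)) as [lB canB].
  destruct (mat_univ matX (@mcone_fmap _ _ RS X c)) as [mX canX].
  destruct (mat_univ matY (@mcone_fmap _ _ RS Y c)) as [mY canY].
  simpl in canA, canB, canX, canY.
  assert (Hg : exists g : Hom LAo LBo, forall s u hu nu, g ∘ iA s u hu nu = iB s u hu nu ∘ f s).
  { apply (lat_univ latA). intros s s' u u' w hu nu hu' nu' hw e. cbv beta. nrm.
    rw (ntc_nat f w). rw (proj1 latB s s' u u' w hu nu hu' nu' hw e). reflexivity. }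
  destruct Hg as [g mapg].
  assert (HaY : exists aY : Aut c -> Hom LBo LBo, lat_act iB aY).
  { apply (@choice_fun (Aut c) (fun _ => Hom LBo LBo) (fun t h => forall s u hu nu hu' nu', h ∘ iB s u hu nu = iB s (proj1_sig t ∘ u) hu' nu')).
    intros t.
    destruct (lat_univ latB (c := fun s (u : Hom s c) (hu : plus RS u) (nu : ~ iso u) => iB s (proj1_sig t ∘ u) (plt RS t hu) (nlt t nu))) as [h Hh].
    - intros s s' u u' w hu nu hu' nu' hw e. apply (proj1 latB); auto.
      rewrite e. apply comp_assoc.
    - exists h. intros. rewrite Hh. apply LFam_irr. reflexivity. }
  destruct HaY as [aY actY].

  assert (aY1 : forall h, aY (exist _ (idm c) h) = idm LBo).
  { intros h. apply (lat_ext _ _ _ latB). intros s u hu nu.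
    rewrite (actY _ s u hu nu (plt RS _ hu) (nlt _ nu)), comp_idl.
    apply LFam_irr. simpl. apply comp_idl. }
  assert (aYc : forall (t t' : Aut c) h, aY (exist _ (proj1_sig t ∘ proj1_sig t') h) = aY t ∘ aY t').
  { intros t t' h. apply (lat_ext _ _ _ latB). intros s u hu nu.
    rewrite (actY _ s u hu nu (plt RS _ hu) (nlt _ nu)). nrm.
    rw (actY t' s u hu nu (plt RS t' hu) (nlt t' nu)).
    rw (actY t s _ (plt RS t' hu) (nlt t' nu) (plt RS t (plt RS t' hu)) (nlt t (nlt t' nu))).
    apply LFam_irr. simpl. symmetry. apply comp_assoc. }
  destruct (mc_pushouts HE lA g) as [P [i1 [i2 po]]].
  assert (Hk : exists k : Hom P (B c), k ∘ i1 = f c /\ k ∘ i2 = lB).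
  { apply (po_univ _ _ _ po). apply (lat_ext _ _ _ latA). intros s u hu nu. nrm.
    rw (canA s u hu nu). rw (mapg s u hu nu). rw (canB s u hu nu). apply (ntc_nat f u). }
  destruct Hk as [k [k1 k2]].
  assert (HaP : exists aP : Aut c -> Hom P P, forall t,
     aP t ∘ i1 = i1 ∘ fmap A (proj1_sig t) /\ aP t ∘ i2 = i2 ∘ aY t).
  { apply (@choice_fun (Aut c) (fun _ => Hom P P) (fun t h =>
       h ∘ i1 = i1 ∘ fmap A (proj1_sig t) /\ h ∘ i2 = i2 ∘ aY t)).
    intros t. apply (po_univ _ _ _ po). apply (lat_ext _ _ _ latA). intros s u hu nu. nrm.
    rw (canA s u hu nu). rewrite <- (fmap_comp A u (proj1_sig t)).
    rewrite <- (canA s _ (plt RS t hu) (nlt t nu)). nrm.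
    rw (proj1 po). rw (mapg s _ (plt RS t hu) (nlt t nu)).
    rw (mapg s u hu nu). rw (actY t s u hu nu (plt RS t hu) (nlt t nu)). reflexivity. }
  destruct HaP as [aP HaP].
  assert (actP : is_action aP).
  { split.
    - intros h. apply (po_ext _ _ _ po).
      + rewrite (proj1 (HaP _)). simpl. rewrite fmap_id, comp_idr, comp_idl. reflexivity.
      + rewrite (proj2 (HaP _)). rewrite aY1, comp_idr, comp_idl. reflexivity.
    - intros t t' h. apply (po_ext _ _ _ po).
      + nrm. rewrite (proj1 (HaP _)). rw (proj1 (HaP t')). rw (proj1 (HaP t)). simpl.
        rewrite fmap_comp. nrm. reflexivity.
      + nrm. rewrite (proj2 (HaP _)). rw (proj2 (HaP t')). rw (proj2 (HaP t)).
        rewrite aYc. reflexivity. }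
  assert (keq : forall t : Aut c, k ∘ aP t = fmap B (proj1_sig t) ∘ k).
  { intros t. apply (po_ext _ _ _ po); nrm.
    - rw (proj1 (HaP t)). rw k1. rw k1. apply (ntc_nat f).
    - rw (proj2 (HaP t)). rw k2. rw k2. apply (lat_ext _ _ _ latB). intros s u hu nu. nrm.
      rw (actY t s u hu nu (plt RS t hu) (nlt t nu)). rw canB. rw canB. apply fmap_comp. }
  assert (cofk : cofG W F aP (fun t => fmap B (proj1_sig t)) k).
  { exact (proj1 Hf c LAo iA LBo iB latA latB lA lB g aY canA canB mapg actY P i1 i2 po k aP k1 k2 HaP). }
  assert (Wk : W _ _ k).
  { destruct (HL latA latB mapg) as [Cg Wg].
    assert (Wi1 : W _ _ i1).
    { apply (llp_W HE). intros x y q Fq. exact (pushout_llp HE po Cg Wg x y q Fq). }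
    apply (mc_2of3_right HE (f:=i1)); auto. simpl. rewrite k1. apply (proj2 Hf). }
  assert (Hg' : exists g' : Hom MX MY, forall s u hu nu, qY s u hu nu ∘ g' = p s ∘ qX s u hu nu).
  { apply (mat_univ matY). intros s s' u u' w hu nu hu' nu' hw e. cbv beta.
    rewrite comp_assoc, <- (ntc_nat p w). nrm. rewrite (proj1 matX s s' u u' w hu nu hu' nu' hw e). reflexivity. }
  destruct Hg' as [g' mapg'].
  destruct (mc_pullbacks HE g' mY) as [Q [q1 [q2 pb]]].
  assert (Hk' : exists k' : Hom (X c) Q, q1 ∘ k' = mX /\ q2 ∘ k' = p c).
  { apply (pb_univ _ _ _ pb). apply (mat_ext _ _ _ matY). intros s u hu nu. nrm.
    rw (mapg' s u hu nu). rw (canX s u hu nu). rw (canY s u hu nu). apply (ntc_nat p u). }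
  destruct Hk' as [k' [k'1 k'2]].
  assert (Fk' : F _ _ k') by exact (Hp matX matY canX canY mapg' pb k' k'1 k'2).
  assert (HaM : exists aM : Aut c -> Hom MX MX, forall t s u hu nu hu' nu',
     qX s u hu nu ∘ aM t = qX s (u ∘ proj1_sig t) hu' nu').
  { apply (@choice_fun (Aut c) (fun _ => Hom MX MX) (fun t h => forall s u hu nu hu' nu',
       qX s u hu nu ∘ h = qX s (u ∘ proj1_sig t) hu' nu')).
    intros t.
    destruct (mat_univ matX (c := fun s (u : Hom c s) (hu : minus RS u) (nu : ~ iso u) =>
       qX s (u ∘ proj1_sig t) (mrt RS t hu) (nrt t nu))) as [h Hh].
    - intros s s' u u' w hu nu hu' nu' hw e. cbv beta. apply (proj1 matX); auto.
      rewrite e. symmetry; apply comp_assoc.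
    - exists h. intros. rewrite Hh. apply MFam_irr. reflexivity. }
  destruct HaM as [aM HaM].
  assert (aM1 : forall h, aM (exist _ (idm c) h) = idm MX).
  { intros h. apply (mat_ext _ _ _ matX). intros s u hu nu.
    rewrite (HaM _ s u hu nu (mrt RS _ hu) (nrt _ nu)), comp_idr.
    apply MFam_irr. simpl. apply comp_idr. }
  assert (aMc : forall (t t' : Aut c) h, aM (exist _ (proj1_sig t ∘ proj1_sig t') h) = aM t ∘ aM t').
  { intros t t' h. apply (mat_ext _ _ _ matX). intros s u hu nu.
    rewrite (HaM _ s u hu nu (mrt RS _ hu) (nrt _ nu)). rewrite comp_assoc.
    rewrite (HaM t s u hu nu (mrt RS t hu) (nrt t nu)).
    rewrite (HaM t' s _ (mrt RS t hu) (nrt t nu) (mrt RS t' (mrt RS t hu)) (nrt t' (nrt t nu))).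
    apply MFam_irr. simpl. apply comp_assoc. }
  assert (HaQ : exists aQ : Aut c -> Hom Q Q, forall t,
     q1 ∘ aQ t = aM t ∘ q1 /\ q2 ∘ aQ t = fmap Y (proj1_sig t) ∘ q2).
  { apply (@choice_fun (Aut c) (fun _ => Hom Q Q) (fun t h =>
       q1 ∘ h = aM t ∘ q1 /\ q2 ∘ h = fmap Y (proj1_sig t) ∘ q2)).
    intros t. apply (pb_univ _ _ _ pb). apply (mat_ext _ _ _ matY). intros s u hu nu. nrm.
    rw (mapg' s u hu nu). rw (HaM t s u hu nu (mrt RS t hu) (nrt t nu)).
    rw (canY s u hu nu). rw (eq_sym (fmap_comp Y (proj1_sig t) u)).
    rewrite <- (canY s _ (mrt RS t hu) (nrt t nu)). nrm.
    rw (eq_sym (proj1 pb)). rw (mapg' s _ (mrt RS t hu) (nrt t nu)). reflexivity. }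
  destruct HaQ as [aQ HaQ].
  assert (actQ : is_action aQ).
  { split.
    - intros h. apply (pb_ext _ _ _ pb).
      + rewrite (proj1 (HaQ _)). rewrite aM1, comp_idr, comp_idl. reflexivity.
      + rewrite (proj2 (HaQ _)). simpl. rewrite fmap_id, comp_idr, comp_idl. reflexivity.
    - intros t t' h. apply (pb_ext _ _ _ pb).
      + rewrite (proj1 (HaQ _)). rewrite comp_assoc. rewrite (proj1 (HaQ t)).
        rewrite <- comp_assoc, (proj1 (HaQ t')). rewrite aMc. nrm. reflexivity.
      + rewrite (proj2 (HaQ _)). rewrite comp_assoc. rewrite (proj2 (HaQ t)).
        rewrite <- comp_assoc, (proj2 (HaQ t')). simpl. rewrite fmap_comp. nrm. reflexivity. }
  assert (k'eq : forall t : Aut c, k' ∘ fmap X (proj1_sig t) = aQ t ∘ k').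
  { intros t. apply (pb_ext _ _ _ pb); nrm.
    - rw k'1. rewrite comp_assoc, (proj1 (HaQ t)). nrm. rw k'1.
      apply (mat_ext _ _ _ matX). intros s u hu nu. nrm.
      rw (HaM t s u hu nu (mrt RS t hu) (nrt t nu)). rw canX. rw canX.
      symmetry. apply fmap_comp.
    - rw k'2. rewrite comp_assoc, (proj2 (HaQ t)). nrm. rw k'2. apply (ntc_nat p). }
  assert (HcX : exists cX : Hom LBo (X c), forall s u hu nu,
     cX ∘ iB s u hu nu = fmap X u ∘ lo s (degpl hu nu)).
  { apply (lat_univ latB). intros s s' u u' w hu nu hu' nu' hw e. cbv beta. nrm.
    rewrite <- (LN _ _ w (degpl hu nu) (degpl hu' nu')). rewrite comp_assoc, <- fmap_comp, <- e. reflexivity. }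
  destruct HcX as [cX HcX].
  assert (HT : exists T : Hom P (X c), T ∘ i1 = a c /\ T ∘ i2 = cX).
  { apply (po_univ _ _ _ po). apply (lat_ext _ _ _ latA). intros s u hu nu. nrm.
    rw (canA s u hu nu). rw (mapg s u hu nu). rw (HcX s u hu nu). rw LA. apply (ntc_nat a). }
  destruct HT as [T [T1 T2]].
  assert (HdX : exists dX : Hom (B c) MX, forall s u hu nu,
     qX s u hu nu ∘ dX = lo s (degmi hu nu) ∘ fmap B u).
  { apply (mat_univ matX). intros s s' u u' w hu nu hu' nu' hw e. cbv beta.
    rewrite comp_assoc, (LN _ _ w (degmi hu nu) (degmi hu' nu')). nrm. rewrite <- fmap_comp, <- e. reflexivity. }
  destruct HdX as [dX HdX].
  assert (HBo : exists Bo : Hom (B c) Q, q1 ∘ Bo = dX /\ q2 ∘ Bo = b c).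
  { apply (pb_univ _ _ _ pb). apply (mat_ext _ _ _ matY). intros s u hu nu. nrm.
    rw (mapg' s u hu nu). rw (HdX s u hu nu). rw LB. rw (canY s u hu nu). apply (ntc_nat b). }
  destruct HBo as [Bo [Bo1 Bo2]].
  assert (sq : k' ∘ T = Bo ∘ k).
  { apply (pb_ext _ _ _ pb); apply (po_ext _ _ _ po); nrm.
    - rw T1. rw k'1. rw k1. rw Bo1. apply (mat_ext _ _ _ matX). intros s u hu nu. nrm.
      rw canX. rw HdX. rewrite <- (ntc_nat f u). rw LA. symmetry. apply (ntc_nat a).
    - rw T2. rw k'1. rw k2. rw Bo1. apply (mat_ext _ _ _ matX). intros s u hu nu.
      apply (lat_ext _ _ _ latB). intros s' v hv nv. nrm.
      rw canX. rw HcX. rw HdX. rw canB. rw (eq_sym (fmap_comp X v u)). rw (eq_sym (fmap_comp B v u)).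
      apply LN.
    - rw T1. rw k'2. rw k1. rw Bo2. apply Hsq.
    - rw T2. rw k'2. rw k2. rw Bo2. apply (lat_ext _ _ _ latB). intros s' v hv nv. nrm.
      rw HcX. rw (ntc_nat p v). rw LB. rw canB. symmetry. apply (ntc_nat b). }
  assert (Teq : forall t : Aut c, T ∘ aP t = fmap X (proj1_sig t) ∘ T).
  { intros t. apply (po_ext _ _ _ po); nrm.
    - rw (proj1 (HaP t)). rw T1. rw T1. apply (ntc_nat a).
    - rw (proj2 (HaP t)). rw T2. rw T2. apply (lat_ext _ _ _ latB). intros s u hu nu. nrm.
      rw (actY t s u hu nu (plt RS t hu) (nlt t nu)). rw HcX. rw HcX.
      rw (eq_sym (fmap_comp X u (proj1_sig t))).
      rewrite (lo_irr s (degpl (plt RS t hu) (nlt t nu)) (degpl hu nu)). reflexivity. }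
  assert (Boeq : forall t : Aut c, Bo ∘ fmap B (proj1_sig t) = aQ t ∘ Bo).
  { intros t. apply (pb_ext _ _ _ pb); nrm.
    - rw Bo1. rewrite comp_assoc, (proj1 (HaQ t)). nrm. rw Bo1.
      apply (mat_ext _ _ _ matX). intros s u hu nu. nrm.
      rw (HaM t s u hu nu (mrt RS t hu) (nrt t nu)). rw HdX. rw HdX.
      rw (eq_sym (fmap_comp B (proj1_sig t) u)).
      rewrite (lo_irr s (degmi (mrt RS t hu) (nrt t nu)) (degmi hu nu)). reflexivity.
    - rw Bo2. rewrite comp_assoc, (proj2 (HaQ t)). nrm. rw Bo2. apply (ntc_nat b). }
  pose (OP := (existT _ P (exist _ aP actP) : GObj E c)).
  pose (OB := (existT _ (B c) (exist _ _ (functor_action B c)) : GObj E c)).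
  pose (OX := (existT _ (X c) (exist _ _ (functor_action X c)) : GObj E c)).
  pose (OQ := (existT _ Q (exist _ aQ actQ) : GObj E c)).
  pose (kG := (exist _ k keq : GHom OP OB)).
  pose (k'G := (exist _ k' k'eq : GHom OX OQ)).
  pose (TG := (exist _ T Teq : GHom OP OX)).
  pose (BoG := (exist _ Bo Boeq : GHom OB OQ)).
  assert (sqG : GComp k'G TG = GComp BoG kG).
  { apply GHom_eq. simpl. exact sq. }
  destruct (mc_lift_tcof (Hproj c) (i := kG) (p := k'G) cofk Wk Fk' sqG) as [lG [LK KL]].
  apply (f_equal (@proj1_sig _ _)) in LK. apply (f_equal (@proj1_sig _ _)) in KL.
  destruct lG as [L Leq]. simpl in LK, KL.
  assert (LK2 : @comp E _ (B c) (X c) L k = T) by exact LK.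
  assert (KL2 : @comp E (B c) (X c) Q k' L = Bo) by exact KL.
  exists L. repeat split.
  - intros t. exact (Leq t).
  - rewrite <- k1, comp_assoc, LK2. exact T1.
  - rewrite <- k'2, <- comp_assoc, KL2. exact Bo2.
  - intros s u hs hu nu. rewrite <- (canB s u hu nu), <- k2. nrm. rw LK2. rw T2. rw HcX.
    rewrite (lo_irr s (degpl hu nu) hs). reflexivity.
  - intros s u hs hu nu. rewrite <- (canX s u hu nu), <- k'1. nrm. rw KL2. rw Bo1. rw HdX.
    rewrite (lo_irr s (degmi hu nu) hs). reflexivity.
Qed.
End Local.

Definition good n (lo : forall s, deg RS s < n -> Hom (B s) (X s)) : Prop :=
  (forall s hs, lo s hs ∘ f s = a s) /\ (forall s hs, p s ∘ lo s hs = b s) /\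
  (forall s r (u : Hom s r) hs hr, fmap X u ∘ lo s hs = lo r hr ∘ fmap B u).
Arguments good : clear implicits.

Definition cls (r : R) : R -> Prop := fun s => exists th : Hom r s, iso th.
Lemma iso_id (r : R) : iso (idm r).
Proof. exists (idm r). rewrite comp_idl. auto. Qed.
Lemma cls_ex r : exists s, cls r s.
Proof. exists r, (idm r). apply iso_id. Qed.
Definition repOf (P : R -> Prop) (h : exists s, P s) : R :=
  proj1_sig (constructive_indefinite_description _ h).
Definition rep r := @repOf (cls r) (cls_ex r).
Lemma rep_cls r : cls r (rep r).
Proof. unfold rep, repOf. exact (proj2_sig (constructive_indefinite_description _ _)). Qed.
Lemma repOf_eq (P Q : R -> Prop) h1 h2 : P = Q -> @repOf P h1 = @repOf Q h2.
Proof. intros ->. f_equal. apply proof_irrelevance. Qed.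
Lemma cls_iso r r' (φ : Hom r r') : iso φ -> cls r = cls r'.
Proof.
  intros Hφ. destruct (isoT Hφ) as [φ' [H1 H2]].
  apply functional_extensionality. intros s. apply propositional_extensionality. split.
  - intros [th Hth]. exists (th ∘ φ'). apply iso_comp; auto. eapply iso_of_inv; eauto.
  - intros [th Hth]. exists (th ∘ φ). apply iso_comp; auto.
Qed.
Lemma rep_iso r r' (φ : Hom r r') : iso φ -> rep r = rep r'.
Proof. intros H. unfold rep. apply repOf_eq. eapply cls_iso; eauto. Qed.
Definition rep_th r : {th : Hom r (rep r) & {th' : Hom (rep r) r | th' ∘ th = idm r /\ th ∘ th' = idm (rep r)}}.
Proof.
  destruct (constructive_indefinite_description _ (rep_cls r)) as [th Hth].
  exists th. exact (isoT Hth).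
Defined.

Lemma transport (c : R) (L : Hom (B c) (X c))
  (Leqv : forall t : Aut c, L ∘ fmap B (proj1_sig t) = fmap X (proj1_sig t) ∘ L)
  r r' (θ : Hom r c) (θ' : Hom c r) (ψ : Hom r' c) (ψ' : Hom c r') (φ : Hom r r') :
  θ' ∘ θ = idm r -> θ ∘ θ' = idm c -> ψ' ∘ ψ = idm r' -> ψ ∘ ψ' = idm c -> iso φ ->
  fmap X ψ' ∘ (L ∘ (fmap B ψ ∘ fmap B φ)) = fmap X φ ∘ (fmap X θ' ∘ (L ∘ fmap B θ)).
Proof.
  intros H1 H2 H3 H4 Hφ.
  assert (Ht : iso (ψ ∘ φ ∘ θ')).
  { apply iso_comp. - exists θ; auto. - apply iso_comp; auto. exists ψ'; auto. }
  specialize (Leqv (exist _ _ Ht)). simpl in Leqv.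
  replace (fmap B ψ ∘ fmap B φ) with (fmap B (ψ ∘ φ ∘ θ') ∘ fmap B θ).
  2:{ rewrite <- !fmap_comp. f_equal. nrm. rewrite H1, comp_idr. reflexivity. }
  rw Leqv. rw (eq_sym (fmap_comp X (ψ ∘ (φ ∘ θ')) ψ')). rw (eq_sym (fmap_comp X θ' φ)).
  replace (ψ' ∘ (ψ ∘ (φ ∘ θ'))) with (φ ∘ θ'). reflexivity.
  rewrite comp_assoc, H3, comp_idl. reflexivity.
Qed.

Lemma transport2 n (Lc : forall c, deg RS c = n -> Hom (B c) (X c))
  (Leqv : forall c hc (t : Aut c), Lc c hc ∘ fmap B (proj1_sig t) = fmap X (proj1_sig t) ∘ Lc c hc)
  c c' (hc : deg RS c = n) (hc' : deg RS c' = n) (e : c = c')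
  r r' (θ : Hom r c) (θ' : Hom c r) (ψ : Hom r' c') (ψ' : Hom c' r') (φ : Hom r r') :
  θ' ∘ θ = idm r -> θ ∘ θ' = idm c -> ψ' ∘ ψ = idm r' -> ψ ∘ ψ' = idm c' -> iso φ ->
  fmap X ψ' ∘ (Lc c' hc' ∘ (fmap B ψ ∘ fmap B φ)) = fmap X φ ∘ (fmap X θ' ∘ (Lc c hc ∘ fmap B θ)).
Proof.
  intros. subst c'. rewrite (proof_irrelevance _ hc' hc). apply transport; auto.
Qed.

Lemma deg_minus_le (s c : R) (h : Hom s c) : minus RS h -> deg RS c <= deg RS s.
Proof.
  intros Hh. destruct (classic (iso h)) as [Hi|Hn].
  - rewrite (deg_iso RS Hi). auto.
  - apply Nat.lt_le_incl. apply (deg_minus (f:=h)); auto.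
Qed.
Lemma deg_plus_le (s c : R) (h : Hom s c) : plus RS h -> deg RS s <= deg RS c.
Proof.
  intros Hh. destruct (classic (iso h)) as [Hi|Hn].
  - rewrite (deg_iso RS Hi). auto.
  - apply Nat.lt_le_incl. apply (deg_plus (f:=h)); auto.
Qed.

Arguments deg_minus_le {s c h} _.
Arguments deg_plus_le {s c h} _.
Lemma step n lo : good n lo -> exists lo' : forall s, deg RS s < S n -> Hom (B s) (X s),
   good (S n) lo' /\ forall s h h', lo' s h' = lo s h.
Proof.
  intros [LA [LB LN]].
  assert (HLc : exists Lc : forall c, deg RS c = n -> Hom (B c) (X c), forall c hc,
    (forall t : Aut c, Lc c hc ∘ fmap B (proj1_sig t) = fmap X (proj1_sig t) ∘ Lc c hc) /\
    Lc c hc ∘ f c = a c /\ p c ∘ Lc c hc = b c /\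
    (forall s (u : Hom s c) (hs : deg RS s < n), plus RS u -> ~ iso u ->
      Lc c hc ∘ fmap B u = fmap X u ∘ lo s hs) /\
    (forall s (u : Hom c s) (hs : deg RS s < n), minus RS u -> ~ iso u ->
      fmap X u ∘ Lc c hc = lo s hs ∘ fmap B u)).
  { apply (@choice_fun R (fun c => deg RS c = n -> Hom (B c) (X c))
      (fun c Lf => forall hc,
    (forall t : Aut c, Lf hc ∘ fmap B (proj1_sig t) = fmap X (proj1_sig t) ∘ Lf hc) /\
    Lf hc ∘ f c = a c /\ p c ∘ Lf hc = b c /\
    (forall s (u : Hom s c) (hs : deg RS s < n), plus RS u -> ~ iso u ->
      Lf hc ∘ fmap B u = fmap X u ∘ lo s hs) /\
    (forall s (u : Hom c s) (hs : deg RS s < n), minus RS u -> ~ iso u ->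
      fmap X u ∘ Lf hc = lo s hs ∘ fmap B u))).
    intros c. destruct (Nat.eq_dec (deg RS c) n) as [hc|nc].
    - destruct (@local_lift n lo LA LB LN c hc) as [L HL']. exists (fun _ => L). intros _. exact HL'.
    - exists (fun hc => False_rect _ (nc hc)). intros hc. exfalso. auto. }
  destruct HLc as [Lc HLc].
  assert (hrep : forall r, deg RS r = n -> deg RS (rep r) = n).
  { intros r hr. rewrite <- hr. symmetry. apply (deg_iso RS (f := projT1 (rep_th r))).
    destruct (rep_th r) as [th [th' [H1 H2]]]. simpl. exists th'. auto. }
  pose (l := fun r (hr : deg RS r = n) =>
     fmap X (proj1_sig (projT2 (rep_th r))) ∘ (Lc (rep r) (hrep r hr) ∘ fmap B (projT1 (rep_th r)))).
  assert (la : forall r hr, l r hr ∘ f r = a r).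
  { intros r hr. unfold l. destruct (rep_th r) as [th [th' [H1 H2]]]. simpl. nrm.
    destruct (HLc _ (hrep r hr)) as [_ [Ha _]].
    rewrite <- (ntc_nat f th). rw Ha. rw (ntc_nat a th). rw (eq_sym (fmap_comp X th th')).
    rewrite H1, fmap_id, comp_idl. reflexivity. }
  assert (lb : forall r hr, p r ∘ l r hr = b r).
  { intros r hr. unfold l. destruct (rep_th r) as [th [th' [H1 H2]]]. simpl. nrm.
    destruct (HLc _ (hrep r hr)) as [_ [_ [Hb _]]].
    rw (ntc_nat p th'). rw Hb. rw (ntc_nat b th). rw (eq_sym (fmap_comp Y th th')).
    rewrite H1, fmap_id, comp_idl. reflexivity. }
  assert (lc : forall r hr s (u : Hom s r) (hs : deg RS s < n), plus RS u -> ~ iso u ->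
     l r hr ∘ fmap B u = fmap X u ∘ lo s hs).
  { intros r hr s u hs hu nu. unfold l. destruct (rep_th r) as [th [th' [H1 H2]]]. simpl. nrm.
    destruct (HLc _ (hrep r hr)) as [_ [_ [_ [Hc _]]]].
    assert (Hth : iso th) by (eapply iso_of_inv; eauto).
    rw (eq_sym (fmap_comp B u th)).
    rw (Hc s (th ∘ u) hs (plus_comp hu (plus_iso RS Hth)) (niso_post Hth nu)).
    rw (eq_sym (fmap_comp X (th ∘ u) th')). f_equal. f_equal.
    rewrite comp_assoc, H1, comp_idl. reflexivity. }
  assert (ld : forall r hr s (u : Hom r s) (hs : deg RS s < n), minus RS u -> ~ iso u ->
     fmap X u ∘ l r hr = lo s hs ∘ fmap B u).
  { intros r hr s u hs hu nu. unfold l. destruct (rep_th r) as [th [th' [H1 H2]]]. simpl. nrm.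
    destruct (HLc _ (hrep r hr)) as [_ [_ [_ [_ Hd]]]].
    assert (Hth' : iso th') by (eapply iso_of_inv; eauto).
    rw (eq_sym (fmap_comp X th' u)).
    rw (Hd s (u ∘ th') hs (minus_comp (minus_iso RS Hth') hu) (niso_pre Hth' nu)).
    rw (eq_sym (fmap_comp B th (u ∘ th'))). f_equal. f_equal.
    rewrite H1, comp_idr. reflexivity. }
  assert (le : forall r r' (φ : Hom r r') hr hr', iso φ -> l r' hr' ∘ fmap B φ = fmap X φ ∘ l r hr).
  { intros r r' φ hr hr' Hφ. unfold l.
    pose proof (rep_iso Hφ) as Erep.
    destruct (rep_th r) as [th [th' [H1 H2]]]. destruct (rep_th r') as [ps [ps' [H3 H4]]]. simpl. nrm.
    apply (@transport2 n Lc (fun c hc t => proj1 (HLc c hc) t) _ _ (hrep r hr) (hrep r' hr') Erep); auto. }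
  pose (lo' := fun s (h' : deg RS s < S n) => match lt_dec (deg RS s) n with
     | left h => lo s h | right nh => l s (ltac:(lia)) end).
  assert (lo'_lt : forall s h' h, lo' s h' = lo s h).
  { intros s h' h. unfold lo'. destruct (lt_dec (deg RS s) n) as [h0|nh].
    - f_equal. apply proof_irrelevance.
    - contradiction. }
  assert (lo'_eq : forall s h' he, lo' s h' = l s he).
  { intros s h' he. unfold lo'. destruct (lt_dec (deg RS s) n) as [h0|nh].
    - lia.
    - f_equal. apply proof_irrelevance. }
  assert (nat1 : forall s c (h : Hom s c) hs hc, minus RS h -> fmap X h ∘ lo' s hs = lo' c hc ∘ fmap B h).
  { intros s c h hs hc Hh. pose proof (deg_minus_le Hh).
    destruct (lt_dec (deg RS s) n) as [h0|nh].
    - assert (h1 : deg RS c < n) by lia.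
      rewrite (lo'_lt s hs h0), (lo'_lt c hc h1). apply LN.
    - assert (he : deg RS s = n) by lia.
      destruct (classic (iso h)) as [Hi|Hn].
      + assert (he' : deg RS c = n) by (rewrite <- (deg_iso RS Hi); auto).
        rewrite (lo'_eq s hs he), (lo'_eq c hc he'). symmetry. apply le; auto.
      + assert (h1 : deg RS c < n) by (rewrite <- he; apply (deg_minus (f:=h)); auto).
        rewrite (lo'_eq s hs he), (lo'_lt c hc h1). apply ld; auto. }
  assert (nat2 : forall c r (h : Hom c r) hc hr, plus RS h -> fmap X h ∘ lo' c hc = lo' r hr ∘ fmap B h).
  { intros c r h hc hr Hh. pose proof (deg_plus_le Hh).
    destruct (lt_dec (deg RS r) n) as [h0|nh].
    - assert (h1 : deg RS c < n) by lia.
      rewrite (lo'_lt r hr h0), (lo'_lt c hc h1). apply LN.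
    - assert (he : deg RS r = n) by lia.
      destruct (classic (iso h)) as [Hi|Hn].
      + assert (he' : deg RS c = n) by (rewrite (deg_iso RS Hi); auto).
        rewrite (lo'_eq r hr he), (lo'_eq c hc he'). symmetry. apply le; auto.
      + assert (h1 : deg RS c < n) by (rewrite <- he; apply (deg_plus (f:=h)); auto).
        rewrite (lo'_eq r hr he), (lo'_lt c hc h1). symmetry. apply lc; auto. }
  exists lo'. split; [split; [|split]|].
  - intros s hs. destruct (lt_dec (deg RS s) n) as [h0|nh].
    + rewrite (lo'_lt s hs h0). apply LA.
    + assert (he : deg RS s = n) by lia. rewrite (lo'_eq s hs he). apply la.
  - intros s hs. destruct (lt_dec (deg RS s) n) as [h0|nh].
    + rewrite (lo'_lt s hs h0). apply LB.
    + assert (he : deg RS s = n) by lia. rewrite (lo'_eq s hs he). apply lb.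
  - intros s r u hs hr. destruct (fact_ex RS u) as [c [h [g [Hh [Hg ->]]]]].
    assert (hc : deg RS c < S n) by (pose proof (deg_minus_le Hh); lia).
    rewrite (fmap_comp X), (fmap_comp B). nrm.
    rewrite (nat1 s c h hs hc Hh). rewrite comp_assoc, (nat2 c r g hc hr Hg). nrm. reflexivity.
  - intros s h h'. apply lo'_lt.
Qed.

Definition stage n := { lo : forall s, deg RS s < n -> Hom (B s) (X s) | good n lo }.

Lemma good0 : good 0 (fun s h => False_rect _ (Nat.nlt_0_r _ h)).
Proof. repeat split; intros; exfalso; lia. Qed.

Definition next n (st : stage n) : stage (S n) :=
  let e := @step n (proj1_sig st) (proj2_sig st) in
  exist _ (proj1_sig (constructive_indefinite_description _ e))
    (proj1 (proj2_sig (constructive_indefinite_description _ e))).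

Lemma next_ext n (st : stage n) s h h' : proj1_sig (next st) s h' = proj1_sig st s h.
Proof.
  unfold next. simpl.
  exact (proj2 (proj2_sig (constructive_indefinite_description _ (@step n (proj1_sig st) (proj2_sig st)))) s h h').
Qed.

Fixpoint sq n : stage n :=
  match n with 0 => exist _ _ good0 | S m => next (sq m) end.

Lemma sq_coh k n s (h : deg RS s < n) (h' : deg RS s < k + n) :
  proj1_sig (sq (k + n)) s h' = proj1_sig (sq n) s h.
Proof.
  induction k.
  - simpl. f_equal. apply proof_irrelevance.
  - assert (h'' : deg RS s < k + n) by lia.
    etransitivity; [exact (next_ext (sq (k + n)) s h'' h') | apply IHk].
Qed.

Lemma sq_coh2 m n s (h : deg RS s < n) (h' : deg RS s < m) : n <= m ->
  proj1_sig (sq m) s h' = proj1_sig (sq n) s h.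
Proof.
  intros Hle. assert (Hm : m = (m - n) + n) by lia.
  revert h'. rewrite Hm. intros h'. apply sq_coh.
Qed.

Definition lfin r : Hom (B r) (X r) := proj1_sig (sq (S (deg RS r))) r (Nat.lt_succ_diag_r _).

Lemma lfin_eq m r h : proj1_sig (sq m) r h = lfin r.
Proof. unfold lfin. apply sq_coh2. lia. Qed.

Lemma lfin_nat s r (u : Hom s r) : lfin r ∘ fmap B u = fmap X u ∘ lfin s.
Proof.
  pose (m := S (deg RS s + deg RS r)).
  assert (hs : deg RS s < m) by (unfold m; lia).
  assert (hr : deg RS r < m) by (unfold m; lia).
  destruct (proj2_sig (sq m)) as [_ [_ HN]].
  rewrite <- (lfin_eq s hs), <- (lfin_eq r hr). symmetry. apply HN.
Qed.

Lemma main_llp : exists l : NatTrans B X, forall r, l r ∘ f r = a r /\ p r ∘ l r = b r.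
Proof.
  exists {| ntc := lfin; ntc_nat := lfin_nat |}. intros r. simpl.
  destruct (proj2_sig (sq (S (deg RS r)))) as [HA [HB _]]. split.
  - unfold lfin. apply HA.
  - unfold lfin. apply HB.
Qed.
End Main.

Theorem lemma5p2 (R : Category) (RS : GenReedy R) (E : Category)
  (W Cf F : MorClass E)
  (HE : is_model_category W Cf F)
  (Hproj : R_projective R W Cf F)
  (Hlat : forall (X : Functor R E) (r : R),
      exists (L : E) (i : LFam RS X r L), is_latching i)
  (Hmat : forall (X : Functor R E) (r : R),
      exists (M : E) (q : MFam RS X r M), is_matching q)
  (A B : Functor R E) (f : NatTrans A B)
  (Hf : trivial_reedy_cofibration RS W F f)
  (HL : latching_trivial_cofibrations RS W Cf f) :
  forall (X Y : Functor R E) (p : NatTrans X Y),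
    reedy_fibration RS F p -> llp_nat f p.
Proof.
  intros X Y p Hp a b Hsq.
  exact (main_llp HE Hproj Hlat Hmat Hf HL Hp a b Hsq).
Qed.
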